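(* (1) Let $K\ge 2$ and $N\ge K+1$, and let $F\in\mathcal F_K\setminus\mathcal F_K^{\mathrm{in}}$. If $Q\in\mathcal Q_K^{\mathrm{an}}$ contains a column $Q_{\star i}$ with $Q_{ki}>0$ for all $k\in\{1,\dots,K\}$, then there is $Q^2\in\mathcal Q_K^{\mathrm{an}}$ such that $FQ=FQ^2$ but $(F,Q)\not\sim(F,Q^2)$. (2) Let $K\ge 2$, let $F\in\mathcal F_K^{\mathrm{in}}$ and $Q\in\mathcal Q_K$, and suppose there are a column index $k_0$ and $0<\delta<1/2$ with $\delta\le F_{sk_0}\le 1-\delta$ for all $s\in\{1,\dots,M\}$. Then there are $Q^2\in\mathcal Q_K\setminus\mathcal Q_K^{\mathrm{an}}$ and $F^2\in\mathcal F_K^{\mathrm{in}}$ such that $FQ=F^2Q^2$ but $(F,Q)\not\sim(F^2,Q^2)$. Moreover $Q^2$ can be chosen so that $\{k: e_k \text{ is a column of } Q^2\}=\{k: e_k\text{ is a column of }Q\}\setminus\{k_0\}$.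
   Context: Fix positive integers $M$ and $N$. For a positive integer $K$, $\mathcal F_K$ is the set of real $M\times K$ matrices with all entries in $[0,1]$, and $\mathcal Q_K$ is the set of real $K\times N$ matrices with entries in $[0,1]$ each of whose columns sums to $1$. $e_k$ denotes the $k$-th standard basis vector of $\mathbb R^K$, and $A_{\star j}$ denotes the $j$-th column of a matrix $A$. $\mathcal Q_K^{\mathrm{an}}$ is the set of $Q\in\mathcal Q_K$ such that for every $k\in\{1,\dots,K\}$ there is $i$ with $Q_{\star i}=e_k$. $\mathcal F_K^{\mathrm{in}}$ is the set of $F\in\mathcal F_K$ such that $F_{\star 1}-F_{\star K},\dots,F_{\star K-1}-F_{\star K}$ are linearly independent. $(F^1,Q^1)\sim(F^2,Q^2)$ means $F^1,F^2$ have the same number $K$ of columns and there is a permutation $\pi$ of $\{1,\dots,K\}$ with $F^2_{sk}=F^1_{s\pi(k)}$ and $Q^2_{ki}=Q^1_{\pi(k)i}$ for all $s,k,i$. *)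

(* Defs.v *)
From HB Require Import structures.
From mathcomp Require Import all_boot all_order all_algebra.
From mathcomp Require Import reals.
From mathcomp Require Import fingroup perm.
Set Implicit Arguments. Unset Strict Implicit. Unset Printing Implicit Defensive.
Import Order.TTheory GRing.Theory Num.Theory.
Local Open Scope ring_scope.

Section Defs.
Variable R : realType.

Definition e_vec (K : nat) (k : 'I_K) : 'cV[R]_K := delta_mx k (0 : 'I_1).

Definition inF (M K : nat) (F : 'M[R]_(M, K)) : Prop :=
  forall s k, 0 <= F s k <= 1.

Definition inQ (K N : nat) (Q : 'M[R]_(K, N)) : Prop :=
  (forall k i, 0 <= Q k i <= 1) /\ (forall i, \sum_(k < K) Q k i = 1).

Definition has_col_e (K N : nat) (Q : 'M[R]_(K, N)) (k : 'I_K) : Prop :=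
  exists i : 'I_N, col i Q = e_vec k.

Definition inQan (K N : nat) (Q : 'M[R]_(K, N)) : Prop :=
  inQ Q /\ forall k : 'I_K, has_col_e Q k.

(* F_K^in : F in F_K with F_{*1}-F_{*K}, ..., F_{*K-1}-F_{*K} linearly
   independent.  [j] is the last column index (value K-1). *)
Definition inFin (M K : nat) (F : 'M[R]_(M, K)) : Prop :=
  inF F /\
  forall j : 'I_K, val j = K.-1 ->
  forall c : 'I_K -> R,
    (forall s : 'I_M, \sum_(k < K | (val k < K.-1)%N) c k * (F s k - F s j) = 0) ->
    forall k : 'I_K, (val k < K.-1)%N -> c k = 0.

Definition equivFQ (M K N : nat) (F1 : 'M[R]_(M, K)) (Q1 : 'M[R]_(K, N))
  (F2 : 'M[R]_(M, K)) (Q2 : 'M[R]_(K, N)) : Prop :=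
  exists pi : {perm 'I_K},
    (forall s k, F2 s k = F1 s (pi k)) /\ (forall k i, Q2 k i = Q1 (pi k) i).

End Defs.

(* Main.v *)
Require Import Defs.
From HB Require Import structures.
From mathcomp Require Import all_boot all_order all_algebra.
From mathcomp Require Import reals.
From mathcomp Require Import fingroup perm.
From mathcomp Require Import zify ring lra.
From Stdlib Require Import Classical.
Import Order.TTheory GRing.Theory Num.Theory.
Local Open Scope ring_scope.

Section Aux.
Variable R : realType.

Lemma colE {K N : nat} (Q : 'M[R]_(K,N)) i k :
  col i Q = e_vec R k <-> forall a, Q a i = (a == k)%:R.
Proof.
split.
- move=> H a; have := congr1 (fun A : 'cV[R]_K => A a 0) H.
  by rewrite /e_vec !mxE eqxx andbT; move=> ->.
- move=> H; apply/matrixP => a b; by rewrite /e_vec !mxE (ord1 b) eqxx andbT H.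
Qed.

Lemma sum_ind {K : nat} (a : 'I_K) (f : 'I_K -> R) :
  \sum_k (k == a)%:R * f k = f a.
Proof.
rewrite (bigD1 a) //= eqxx mul1r big1 ?addr0 // => k /negbTE ->; by rewrite mul0r.
Qed.

Lemma sum_indc {K : nat} (a : 'I_K) (c : R) (f : 'I_K -> R) :
  \sum_k c * (k == a)%:R * f k = c * f a.
Proof. rewrite -sum_ind mulr_sumr; apply: eq_bigr => k _; by rewrite mulrA. Qed.

Lemma sum3 {K : nat} (f : 'I_K -> R) (a b : 'I_K) : b != a ->
  \sum_k f k = f a + f b + \sum_(k | (k != a) && (k != b)) f k.
Proof. by move=> ba; rewrite (bigD1 a) //= (bigD1 b) //= addrA. Qed.

Lemma two_le_sum {K : nat} (f : 'I_K -> R) (a b : 'I_K) : b != a ->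
  (forall k, 0 <= f k) -> f a + f b <= \sum_k f k.
Proof.
move=> ba h; rewrite (sum3 f a b ba) lerDl; apply: sumr_ge0 => k _; exact: h.
Qed.

Lemma other {K : nat} (hK : (2 <= K)%N) (k : 'I_K) : exists l : 'I_K, l != k.
Proof.
have h0 : (0 < K)%N by lia. have h1 : (1 < K)%N by lia.
case: (eqVneq k (Ordinal h0)) => [->|ne]; last by exists (Ordinal h0); rewrite eq_sym.
by exists (Ordinal h1); apply/eqP => /(congr1 val).
Qed.

Lemma split_last {K : nat} (j : 'I_K) (g : 'I_K -> R) : val j = K.-1 ->
  \sum_k g k = \sum_(k | (val k < K.-1)%N) g k + g j.
Proof.
move=> hj; rewrite (bigID (fun k : 'I_K => (val k < K.-1)%N)) /=; congr (_ + _).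
apply: big_pred1 => k /=; rewrite -leqNgt.
apply/idP/eqP => [h|->]; last by move: hj => /= ->.
apply/val_inj; move: hj h => /= ->; have := ltn_ord k; lia.
Qed.

Definition aff {M K : nat} (F : 'M[R]_(M,K)) := forall d : 'I_K -> R,
  \sum_k d k = 0 -> (forall s, \sum_k d k * F s k = 0) -> forall k, d k = 0.

Lemma inFin_aff {M K} (F : 'M[R]_(M,K)) : (0 < K)%N -> inFin F -> aff F.
Proof.
move=> hK [_ H] d hs hF k.
have jlt : (K.-1 < K)%N by lia.
pose j := Ordinal jlt.
have hj : val j = K.-1 by [].
have e1 := split_last j d hj.
have hc : forall k : 'I_K, (val k < K.-1)%N -> d k = 0.
  apply: (H j hj d) => s.
  have e2 := split_last j (fun k => d k * F s k) hj.
  rewrite hs in e1; rewrite hF in e2.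
  under eq_bigr do rewrite mulrBr.
  rewrite sumrB -mulr_suml.
  have -> : \sum_(k | (val k < K.-1)%N) d k = - d j by lra.
  rewrite mulNr opprK; lra.
case: (ltnP k K.-1) => hk; first exact: hc.
have kj : k = j by apply/val_inj => /=; have := ltn_ord k; lia.
have z : \sum_(k | (val k < K.-1)%N) d k = 0 by apply: big1 => l hl; exact: hc.
rewrite kj; lra.
Qed.

Lemma aff_inFin {M K} (F : 'M[R]_(M,K)) : inF F -> aff F -> inFin F.
Proof.
move=> hF Ha; split => // j hj c Hc k hk.
pose d := fun k : 'I_K => if (val k < K.-1)%N then c k else - \sum_(l | (val l < K.-1)%N) c l.
have dj : d j = - \sum_(l | (val l < K.-1)%N) c l by rewrite /d hj ltnn.
have dP : forall g : 'I_K -> R, \sum_(l | (val l < K.-1)%N) d l * g l = \sum_(l | (val l < K.-1)%N) c l * g l.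
  by move=> g; apply: eq_bigr => l hl; rewrite /d hl.
have : d k = 0.
  apply: Ha.
  - rewrite (split_last j _ hj) dj.
    have := dP (fun _ => 1); under eq_bigr do rewrite mulr1; under [in X in _ = X -> _]eq_bigr do rewrite mulr1.
    move=> ->; lra.
  - move=> s; rewrite (split_last j _ hj) dP dj.
    have := Hc s; under eq_bigr do rewrite mulrBr; rewrite sumrB -mulr_suml; lra.
by rewrite /d hk.
Qed.



Lemma part1 (M N K : nat) (F : 'M[R]_(M, K)) (Q : 'M[R]_(K, N)) :
     (2 <= K)%N -> (K + 1 <= N)%N ->
     inF F -> ~ inFin F ->
     inQan Q -> (exists i : 'I_N, forall k : 'I_K, 0 < Q k i) ->
     exists Q2 : 'M[R]_(K, N),
       inQan Q2 /\ F *m Q = F *m Q2 /\ ~ equivFQ F Q F Q2.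
Proof.
move=> hK hKN hF hnF [[hQ01 hQs] hQa] [i0 hpos].
have hK0 : (0 < K)%N by lia.
have Q0 : forall k i, 0 <= Q k i by move=> k i; case/andP: (hQ01 k i).
have Q1 : forall k i, Q k i <= 1 by move=> k i; case/andP: (hQ01 k i).
have naff : ~ aff F by move=> Ha; apply: hnF; exact: aff_inFin.
have [d [[hds hdF] [k1 hk1]]] : exists d : 'I_K -> R,
    (\sum_k d k = 0 /\ forall s, \sum_k d k * F s k = 0) /\ exists k, d k != 0.
  apply: NNPP => Hn; apply: naff => d hs hF' k; apply: NNPP => hdk; apply: Hn.
  by exists d; split => //; exists k; apply/eqP.
have qlt1 : forall k, Q k i0 < 1.
  move=> k; have [l lk] := other hK k.
  have := two_le_sum (fun k => Q k i0) k l lk (fun k => Q0 k i0).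
  rewrite /= hQs => h; have := hpos l; lra.
pose f := fun k => Q k i0 * (1 - Q k i0).
have fpos : forall k, 0 < f k.
  by move=> k; rewrite /f mulr_gt0 // ?subr_gt0.
have fle1 : forall k, f k <= Q k i0.
  move=> k; rewrite /f; have := hpos k; have := qlt1 k; nra.
have fle2 : forall k, f k <= 1 - Q k i0.
  move=> k; rewrite /f; have := hpos k; have := qlt1 k; nra.
pose S := \sum_k `|d k| / f k.
have S0 : 0 <= S by apply: sumr_ge0 => k _; rewrite divr_ge0 // ltW.
pose t := (1 + S)^-1.
have tpos : 0 < t by rewrite invr_gt0; lra.
have et : t * (1 + S) = 1 by rewrite mulVf //; apply/eqP; lra.
have bound : forall k, `|t * d k| <= f k.
  move=> k.
  have hSk : `|d k| / f k <= S.
    rewrite /S (bigD1 k) //= lerDl; apply: sumr_ge0 => l _.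
    by rewrite divr_ge0 // ltW.
  rewrite normrM gtr0_norm //.
  have e : `|d k| = (`|d k| / f k) * f k by rewrite divfK // gt_eqF.
  rewrite e; move: hSk; set a := `|d k| / f k => hSk.
  have h2 : 0 <= (t * f k) * (1 + S - a).
    by apply: mulr_ge0; [apply: mulr_ge0; apply: ltW => // | lra].
  have h3 : (t * f k) * (1 + S) = f k by rewrite mulrAC et mul1r.
  nra.
have anc_ne : forall k i, col i Q = e_vec R k -> i != i0.
  move=> k i /colE hi; apply/eqP => e; subst i.
  have [l lk] := other hK k; have := hi l; rewrite (negbTE lk) => h.
  by have := hpos l; rewrite h ltxx.
pose Q2 := \matrix_(k, i) (Q k i + t * (i == i0)%:R * d k).
exists Q2; split; [split; [split|] | split].
- move=> k i; rewrite /Q2 mxE; case: (eqVneq i i0) => [->|ne].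
  + rewrite mulr1; have := bound k; rewrite ler_norml => /andP[h1 h2].
    have := fle1 k; have := fle2 k; move=> *; apply/andP; split; lra.
  + by rewrite mulr0 mul0r addr0.
- move=> i; under eq_bigr do rewrite /Q2 mxE.
  by rewrite big_split /= hQs -mulr_sumr hds mulr0 addr0.
- move=> k; have [i hi] := hQa k; exists i.
  have ne := anc_ne k i hi.
  rewrite -hi; apply/matrixP => a b; by rewrite !mxE (negbTE ne) mulr0 mul0r addr0.
- apply/matrixP => s i; rewrite !mxE.
  under [RHS]eq_bigr do rewrite /Q2 mxE mulrDr.
  rewrite big_split /=.
  have -> : \sum_(j < K) F s j * (t * (i == i0)%:R * d j) = 0.
    transitivity (t * (i == i0)%:R * \sum_j d j * F s j).
      by rewrite mulr_sumr; apply: eq_bigr => j _; ring.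
    by rewrite hdF mulr0.
  by rewrite addr0.
- move=> [pi [hFpi hQpi]].
  have pid : forall k, pi k = k.
    move=> k; have [i hi] := hQa k; have ne := anc_ne k i hi.
    have := hQpi k i; rewrite /Q2 mxE (negbTE ne) mulr0 mul0r addr0 => e.
    have := (colE _ _ _).1 hi k; rewrite eqxx => h1.
    have := (colE _ _ _).1 hi (pi k); rewrite -e h1.
    case: (eqVneq (pi k) k) => // _ /eqP; by rewrite oner_eq0.
  have := hQpi k1 i0; rewrite pid /Q2 mxE eqxx mulr1 => e.
  have : t * d k1 = 0 by lra.
  by move/eqP; rewrite mulf_eq0 (negbTE hk1) orbF gt_eqF.
Qed.


Lemma part2 (M N K : nat) (F : 'M[R]_(M, K)) (Q : 'M[R]_(K, N)) (k0 : 'I_K) (dl : R) :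
     (2 <= K)%N ->
     inFin F -> inQ Q ->
     0 < dl -> dl < 1 / 2 ->
     (forall s : 'I_M, dl <= F s k0 <= 1 - dl) ->
     exists (Q2 : 'M[R]_(K, N)) (F2 : 'M[R]_(M, K)),
       inQ Q2 /\ ~ inQan Q2 /\ inFin F2 /\
       F *m Q = F2 *m Q2 /\ ~ equivFQ F Q F2 Q2 /\
       (forall k : 'I_K, has_col_e Q2 k <-> (has_col_e Q k /\ k <> k0)).
Proof.
move=> hK hFin [hQ01 hQs] dpos dlt hFk0.
have hK0 : (0 < K)%N by lia.
have Q0 : forall k i, 0 <= Q k i by move=> k i; case/andP: (hQ01 k i).
have Q1 : forall k i, Q k i <= 1 by move=> k i; case/andP: (hQ01 k i).
have [hF01 _] := hFin.
have F0 : forall s k, 0 <= F s k by move=> s k; case/andP: (hF01 s k).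
have F1 : forall s k, F s k <= 1 by move=> s k; case/andP: (hF01 s k).
have Ha := inFin_aff F hK0 hFin.
have [j jk0] := other hK k0.
have k0j : k0 != j by rewrite eq_sym.
pose g := dl / (1 - dl).
have h1d : 0 < 1 - dl by lra.
have gpos : 0 < g by rewrite divr_gt0.
have eg : g * (1 - dl) = dl by rewrite divfK // gt_eqF.
pose Q2 := \matrix_(k, i) (Q k i - dl * ((k == k0)%:R - (k == j)%:R) * Q k0 i).
pose F2 := \matrix_(s, k) (F s k + g * (k == k0)%:R * (F s k0 - F s j)).
have Q2k0 : forall i, Q2 k0 i = (1 - dl) * Q k0 i.
  by move=> i; rewrite /Q2 mxE eqxx (negbTE k0j); rewrite ?mulr1n ?mulr0n; ring.
have Q2j : forall i, Q2 j i = Q j i + dl * Q k0 i.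
  by move=> i; rewrite /Q2 mxE eqxx (negbTE jk0); rewrite ?mulr1n ?mulr0n; ring.
have Q2o : forall k i, k != k0 -> k != j -> Q2 k i = Q k i.
  by move=> k i n1 n2; rewrite /Q2 mxE (negbTE n1) (negbTE n2); rewrite ?mulr1n ?mulr0n; ring.
have Q2z : forall k i, Q k0 i = 0 -> Q2 k i = Q k i.
  by move=> k i h; rewrite /Q2 mxE h; rewrite ?mulr1n ?mulr0n; ring.
have F2k0 : forall s, F2 s k0 = F s k0 + g * (F s k0 - F s j).
  by move=> s; rewrite /F2 mxE eqxx; rewrite ?mulr1n ?mulr0n; ring.
have F2o : forall s k, k != k0 -> F2 s k = F s k.
  by move=> s k n1; rewrite /F2 mxE (negbTE n1); rewrite ?mulr1n ?mulr0n; ring.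
have hcol : forall k : 'I_K, has_col_e Q2 k <-> (has_col_e Q k /\ k <> k0).
  move=> k; split.
  - move=> [i /colE hi].
    have e0 := hi k0; rewrite Q2k0 in e0.
    have qz : Q k0 i = 0.
      have := Q0 k0 i; have := Q1 k0 i.
      case: (eqVneq k0 k) e0 => _ e0; rewrite ?mulr1n ?mulr0n in e0; nra.
    split; first by exists i; apply/colE => a; rewrite -hi Q2z.
    move=> ek; move: e0; rewrite qz mulr0 ek eqxx => /eqP; by rewrite eq_sym oner_eq0.
  - move=> [[i /colE hi] nk]; exists i; apply/colE => a.
    have nk' : k0 != k by apply/eqP => e; apply: nk; rewrite e.
    have qz : Q k0 i = 0 by rewrite hi (negbTE nk').
    by rewrite Q2z.
exists Q2, F2; split; [split|split; [|split; [|split; [|split]]]].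
- move=> k i; case: (eqVneq k k0) => [->|nk0].
    by rewrite Q2k0; have := Q0 k0 i; have := Q1 k0 i; move=> *; apply/andP; split; nra.
  case: (eqVneq k j) => [->|nkj]; last by rewrite Q2o.
  rewrite Q2j; have := two_le_sum (fun k => Q k i) k0 j jk0 (fun k => Q0 k i).
  rewrite /= hQs; have := Q0 k0 i; have := Q0 j i; move=> *; apply/andP; split; nra.
- move=> i; rewrite (sum3 (fun k => Q2 k i) k0 j jk0) /= Q2k0 Q2j.
  rewrite (eq_bigr (fun k => Q k i)); last by move=> k /andP[n1 n2]; rewrite Q2o.
  have := hQs i; rewrite (sum3 (fun k => Q k i) k0 j jk0) /=.
  lra.
- move=> [_ hall]; by have [_ []] := (hcol k0).1 (hall k0).
- apply: aff_inFin.
  + move=> s k; case: (eqVneq k k0) => [->|nk]; last by rewrite F2o.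
    rewrite F2k0; have := hFk0 s => /andP[a1 a2].
    have := F0 s j; have := F1 s j => b1 b2.
    have c1 : 0 <= g * (F s k0 - dl) by apply: mulr_ge0; lra.
    have c2 : 0 <= g * (1 - F s j) by apply: mulr_ge0; lra.
    have c3 : 0 <= g * (1 - dl - F s k0) by apply: mulr_ge0; lra.
    have c4 : 0 <= g * F s j by apply: mulr_ge0; lra.
    apply/andP; split; nra.
  + move=> d hs hF2 k.
    pose d' := fun k => d k + g * (k == k0)%:R * d k0 - g * (k == j)%:R * d k0.
    have rest : forall h h2 : 'I_K -> R, (forall k, k != k0 -> k != j -> h k = h2 k) ->
        \sum_(k | (k != k0) && (k != j)) h k = \sum_(k | (k != k0) && (k != j)) h2 k.
      by move=> h h2 hh; apply: eq_bigr => l /andP[n1 n2]; apply: hh.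
    have hs' : \sum_k d' k = 0.
      move: hs; rewrite (sum3 d' k0 j jk0) (sum3 d k0 j jk0) (rest d' d).
        rewrite /d' eqxx (negbTE k0j) (negbTE jk0) eqxx; lra.
      by move=> l n1 n2; rewrite /d' (negbTE n1) (negbTE n2); rewrite ?mulr1n ?mulr0n; ring.
    have hF' : forall s, \sum_k d' k * F s k = 0.
      move=> s; have := hF2 s.
      rewrite (sum3 (fun k => d' k * F s k) k0 j jk0) (sum3 (fun k => d k * F2 s k) k0 j jk0) /=.
      rewrite (rest (fun k => d' k * F s k) (fun k => d k * F s k)); last first.
        by move=> l n1 n2; rewrite /d' (negbTE n1) (negbTE n2); rewrite ?mulr1n ?mulr0n; ring.
      rewrite (rest (fun k => d k * F2 s k) (fun k => d k * F s k)); last first.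
        by move=> l n1 n2; rewrite F2o.
      rewrite F2k0 F2o // /d' eqxx (negbTE k0j) (negbTE jk0) eqxx.
      rewrite ?mulr1n ?mulr0n; lra.
    have hz := Ha d' hs' hF'.
    have dk0 : d k0 = 0.
      have := hz k0; rewrite /d' eqxx (negbTE k0j) ?mulr1n ?mulr0n => h.
      have : (1 + g) * d k0 = 0 by lra.
      move/eqP; rewrite mulf_eq0 => /orP[|/eqP //]; rewrite gt_eqF //; lra.
    by have := hz k; rewrite /d' dk0 !mulr0 addr0 subr0.
- apply/matrixP => s i; rewrite !mxE.
  rewrite (sum3 (fun k => F s k * Q k i) k0 j jk0) (sum3 (fun k => F2 s k * Q2 k i) k0 j jk0) /=.
  rewrite [in RHS](eq_bigr (fun k => F s k * Q k i)); last first.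
    by move=> k /andP[n1 n2]; rewrite Q2o // F2o.
  rewrite Q2k0 Q2j F2k0 F2o //.
  apply/eqP; rewrite -subr_eq0; apply/eqP.
  transitivity ((dl - g * (1 - dl)) * (F s k0 - F s j) * Q k0 i); first by ring.
  by rewrite eg subrr !mul0r.
- move=> [pi [hFpi _]].
  pose l := pi k0.
  pose d := fun k : 'I_K => (1 + g) * (k == k0)%:R - g * (k == j)%:R - (k == l)%:R.
  have hs : \sum_k d k = 0.
    rewrite /d !sumrB.
    have e1 := sum_indc k0 (1 + g) (fun _ => 1).
    have e2 := sum_indc j g (fun _ => 1).
    have e3 := sum_ind l (fun _ => 1).
    under eq_bigr do rewrite -[_ * (_ == k0)%:R]mulr1.
    under [X in _ - X - _ = _]eq_bigr do rewrite -[_ * (_ == j)%:R]mulr1.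
    under [X in _ - _ - X = _]eq_bigr do rewrite -[(_ == l)%:R]mulr1.
    rewrite e1 e2 e3; lra.
  have hF : forall s, \sum_k d k * F s k = 0.
    move=> s; rewrite /d.
    under eq_bigr do rewrite !mulrBl.
    rewrite !sumrB sum_indc sum_indc sum_ind.
    have := hFpi s k0; rewrite F2k0 -/l; lra.
  have := Ha d hs hF k0; rewrite /d eqxx (negbTE k0j) ?mulr1n ?mulr0n.
  case: (eqVneq k0 l) => _; rewrite ?mulr1n ?mulr0n; lra.
- exact: hcol.
Qed.

End Aux.

Theorem mainTheorem2 (R : realType) (M N : nat) (hM : (0 < M)%N) (hN : (0 < N)%N) :
  (* part (1) *)
  (forall (K : nat) (F : 'M[R]_(M, K)) (Q : 'M[R]_(K, N)),
     (2 <= K)%N -> (K + 1 <= N)%N ->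
     inF F -> ~ inFin F ->
     inQan Q -> (exists i : 'I_N, forall k : 'I_K, 0 < Q k i) ->
     exists Q2 : 'M[R]_(K, N),
       inQan Q2 /\ F *m Q = F *m Q2 /\ ~ equivFQ F Q F Q2)
  /\
  (* part (2) *)
  (forall (K : nat) (F : 'M[R]_(M, K)) (Q : 'M[R]_(K, N)) (k0 : 'I_K) (delta : R),
     (2 <= K)%N ->
     inFin F -> inQ Q ->
     0 < delta -> delta < 1 / 2 ->
     (forall s : 'I_M, delta <= F s k0 <= 1 - delta) ->
     exists (Q2 : 'M[R]_(K, N)) (F2 : 'M[R]_(M, K)),
       inQ Q2 /\ ~ inQan Q2 /\ inFin F2 /\
       F *m Q = F2 *m Q2 /\ ~ equivFQ F Q F2 Q2 /\
       (forall k : 'I_K, has_col_e Q2 k <-> (has_col_e Q k /\ k <> k0))).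
Proof.
split.
- move=> K F Q; exact: part1.
- move=> K F Q k0 delta; exact: part2.
Qed.
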